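(* For all integers $n-2\ge k\ge0$, $$(n)_2\,\Lambda_{n-2,k}(\alpha)=\Lambda_{n,k+2}(\alpha)-(4k+6)\,\Lambda_{n,k+1}(\alpha).$$
   Context: Let $(\alpha_n)_{n\ge0}$ be an arbitrary sequence of complex numbers. For $n\ge k\ge0$ define $\Lambda_{n,k}(\alpha)=\sum_{\nu=0}^{k}\binom{n}{\nu}(2k-\nu)_k\,\alpha_{n-\nu}$, where $(m)_k=m(m-1)\cdots(m-k+1)$ is the falling factorial; $(n)_2=n(n-1)$. *)

(* Defs.v *)
From mathcomp Require Import all_boot all_order all_algebra.
From mathcomp Require Import complex.
From mathcomp Require Import reals.
Set Implicit Arguments. Unset Strict Implicit. Unset Printing Implicit Defensive.
Import GRing.Theory.
Local Open Scope ring_scope.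

Definition Lambda (C : comRingType) (alpha : nat -> C) (n k : nat) : C :=
  \sum_(0 <= nu < k.+1) (('C(n, nu) * ((2 * k - nu) ^_ k))%N)%:R * alpha (n - nu)%N.

(* Main.v *)
Require Import Defs.
From mathcomp Require Import all_boot all_order all_algebra.
From mathcomp Require Import complex.
From mathcomp Require Import reals.
From mathcomp Require Import ring zify.
Local Open Scope ring_scope.
Import GRing.Theory.

Lemma coefL (C : comRingType) (m k i : nat) : (i <= k)%N ->
  ((m.+2 ^_ 2 * 'C(m, i) * (2 * k - i) ^_ k)%N)%:R =
  (('C(m.+2, i.+2) * (2 * k.+2 - i.+2) ^_ k.+2)%N)%:R
  - ((4 * k + 6)%N)%:R * (('C(m.+2, i.+2) * (2 * k.+1 - i.+2) ^_ k.+1)%N)%:R :> C.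
Proof.
move=> hi.
have e1 : (2 * k.+2 - i.+2 = (2 * k - i).+2)%N by rewrite !mulnS; lia.
have e2 : (2 * k.+1 - i.+2 = (2 * k - i))%N by rewrite !mulnS; lia.
have hc : (m.+2 ^_ 2 * 'C(m, i) = 'C(m.+2, i.+2) * (i.+2 * i.+1))%N.
  have h1 := mul_bin_diag m.+2 i.+1.
  have h2 := mul_bin_diag m.+1 i.
  rewrite /= in h1 h2.
  rewrite ffactSS ffactn1 -mulnA h2 mulnCA h1.
  rewrite mulnCA; lia.
rewrite hc e1 e2 ffactSS ffactSS ffactnSr.
move: ('C(m.+2, i.+2)) ((2 * k - i) ^_ k) => c f.
have -> : (2 * k - i - k = k - i)%N by lia.
have -> : (2 * k - i = i + 2 * (k - i))%N by lia.
have -> : k = (i + (k - i))%N by lia.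
move: (k - i)%N => d.
rewrite addKn !natrM !natrD ?natrM.
ring.
Qed.

Theorem mainTheorem15 (R : realType) (alpha : nat -> R[i]) (n k : nat) :
  (k <= n - 2)%N -> (2 <= n)%N ->
  ((n ^_ 2)%N)%:R * Lambda alpha (n - 2) k
  = Lambda alpha n k.+2 - ((4 * k + 6)%N)%:R * Lambda alpha n k.+1.
Proof.
case: n => [|[|m]] //= hk _.
rewrite subn2 /=.
rewrite /Lambda.
rewrite subn2 /= in hk.
set B := fun nu => (('C(m.+2, nu) * (2 * k.+1 - nu) ^_ k.+1)%N)%:R * alpha (m.+2 - nu)%N.
have -> : \sum_(0 <= nu < k.+2) B nu = \sum_(0 <= nu < k.+3) B nu.
  rewrite [RHS]big_nat_recr //= /B ffact_small; last by rewrite !mulnS; lia.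
  by rewrite muln0 mul0r addr0.
rewrite !mulr_sumr -sumrB /B.
rewrite [RHS]big_nat_recl // [in RHS]big_nat_recl //=.
have h0 : ((2 * k.+2 - 0) ^_ k.+2 = (4 * k + 6) * (2 * k.+1 - 0) ^_ k.+1)%N.
  rewrite !subn0 !mulnS ffactSS ffactSS ffactnSr.
  move: ((2 * k).+2 ^_ k) => f.
  have -> : ((2 * k).+2 - k = k.+2)%N by lia.
  nia.
have h1 : ((2 * k.+2 - 1) ^_ k.+2 = (4 * k + 6) * (2 * k.+1 - 1) ^_ k.+1)%N.
  rewrite !mulnS !subn1 /= ffactSS ffactSS ffactnSr.
  move: ((2 * k).+1 ^_ k) => f.
  have -> : ((2 * k).+1 - k = k.+1)%N by lia.
  nia.
rewrite h0 h1 !(mulnCA _ (4 * k + 6)%N) !(natrM _ (4 * k + 6)%N) !mulrA !subrr !add0r.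
apply: eq_big_nat => i /andP [_ hi].
rewrite mulrA -natrM mulnA (coefL _ m) ?subSS; last by lia.
by rewrite mulrBl mulrA -natrM.
Qed.
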